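(* Let $r\ge3$ be odd. For any $n\ge r-1$ and $A>0$, there exists $f\in C^r[-1,1]$, identically $0$ on $[-1,-1/2]$ and nonnegative on $[-1,1]$, such that every algebraic polynomial $P_n$ of degree $\le n$ which is nonnegative on $[-1/2,1/2]$ and satisfies $P_n^{(i)}(0)=f^{(i)}(0)$ for $0\le i\le r-1$ obeys $$\|f-P_n\|>A\,\|f^{(r)}\|.$$
   Context: $\|\cdot\|$ is the sup norm on $[-1,1]$. *)

(* Defs.v *)
From HB Require Import structures.
From mathcomp Require Import all_boot all_order all_algebra.
From mathcomp Require Import all_classical all_reals all_analysis.
Set Implicit Arguments. Unset Strict Implicit. Unset Printing Implicit Defensive.
Import Order.TTheory GRing.Theory Num.Theory.
Import numFieldNormedType.Exports.
Local Open Scope classical_set_scope.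
Local Open Scope ring_scope.

Definition supnorm {R : realType} (g : R -> R) : R :=
  sup [set `|g x| | x in `[-1, 1]%classic].

Definition Cr {R : realType} (r : nat) (f : R -> R) : Prop :=
  (forall k x, (k < r)%N -> derivable (derive1n k f) x 1) /\
  continuous (derive1n r f).

(* Main.v *)
Require Import Defs.
From HB Require Import structures.
From mathcomp Require Import all_boot all_order all_algebra.
From mathcomp Require Import all_classical all_reals all_analysis.
From mathcomp Require Import ring lra zify.
Import Order.TTheory GRing.Theory Num.Theory.
Import numFieldNormedType.Exports.
Local Open Scope classical_set_scope.
Local Open Scope ring_scope.

Set Implicit Arguments. Unset Strict Implicit. Unset Printing Implicit Defensive.
Section S.
Context {R : realType}.

Lemma factor2 (p : {poly R}) c : p.[c] = 0 -> p^`().[c] = 0 ->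
  exists q, p = q * ('X - c%:P) ^+ 2.
Proof.
move=> h0 h1.
have /factor_theorem [q1 e1] : root p c by apply/rootP.
have : root q1 c.
  apply/rootP; move: h1; rewrite e1 derivM derivXsubC mulr1 !hornerE.
  by rewrite subrr mulr0 add0r.
move=> /factor_theorem [q2 e2]; exists q2; by rewrite e1 e2 expr2 mulrA.
Qed.

Lemma dz (F : R -> R) (p : {poly R}) c : F c = 0 -> p.[c] = 0 -> p^`().[c] = 0 ->
  (forall x, `|F x| <= `|p.[x]|) -> derivable F c 1 /\ 'D_1 F c = 0.
Proof.
move=> Fc0 h0 h1 Fb.
have [q eq] := factor2 h0 h1.
have key : (fun h : R => h^-1 *: ((F \o shift c) (h *: 1) - F c)) @ 0^' --> (0:R).
  have lim0 : (fun h : R => `|q.[h + c] * h|) @ 0^' --> (0:R).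
    have Lc : (fun h : R => h + c) @ (0:R) --> 0 + c.
      by apply: cvgD; [exact: cvg_id | exact: cvg_cst].
    have Lq : (horner q \o (fun h : R => h + c)) @ (0:R) --> q.[0 + c].
      have HH : {for 0 + c, continuous (horner q)} by exact: continuous_horner.
      exact: (cvg_comp _ _ Lc HH).
    have L1 : (fun h : R => q.[h + c] * h) @ (0:R) --> q.[0 + c] * 0.
      exact: (cvgM Lq cvg_id).
    have L2 := cvg_norm L1; rewrite mulr0 normr0 in L2.
    by apply: cvg_within_filter; apply: L2.
  apply: (@squeeze_cvgr _ _ _ _ (fun h => - `|q.[h + c] * h|) (fun h => `|q.[h + c] * h|)); last first.
  - exact: lim0.
  - have H := cvgN lim0; rewrite oppr0 in H; exact: H.
  near=> h.
  have hn0 : h != 0 by near: h; exact: nbhs_dnbhs_neq.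
  rewrite /= Fc0 subr0 scaler1 -ler_norml.
  rewrite normrM normfV ler_pdivrMl ?normr_gt0 //.
  apply: (le_trans (Fb _)).
  by rewrite eq !hornerE addrK normrM [`|h| * _]mulrC.
split; first by apply/cvg_ex; exists 0.
by rewrite /derive; apply: cvg_lim.
Unshelve. all: by end_near.
Qed.

Definition gluep (a b : R) (p : {poly R}) (x : R) : R :=
  if (a <= x) && (x <= b) then p.[x] else 0.

Lemma glue_le a b p x : `|gluep a b p x| <= `|p.[x]|.
Proof. by rewrite /gluep; case: ifP => // _; rewrite normr0. Qed.

Lemma glue_der a b p : a < b -> p.[a] = 0 -> p.[b] = 0 ->
  p^`().[a] = 0 -> p^`().[b] = 0 ->
  forall x, derivable (gluep a b p) x 1 /\ derive1 (gluep a b p) x = gluep a b p^`() x.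
Proof.
move=> ab pa pb dpa dpb x.
have Hc : forall y, (y < a) || (b < y) -> (\near y, 0 = gluep a b p y) /\ gluep a b p^`() y = 0.
  move=> y /orP[ya|yb].
    split; last by rewrite /gluep ifF //; apply/negbTE; rewrite negb_and -ltNge ya.
    near=> z; rewrite /gluep ifF //; apply/negbTE; rewrite negb_and -ltNge.
    suff -> : z < a by []. by near: z; exact: lt_nbhsl.
  split; last by rewrite /gluep ifF //; apply/negbTE; rewrite negb_and -!ltNge yb orbT.
  near=> z; rewrite /gluep ifF //; apply/negbTE; rewrite negb_and -!ltNge.
  suff -> : b < z by rewrite orbT. by near: z; exact: lt_nbhsr.
have Hcase : (x < a) || (b < x) -> derivable (gluep a b p) x 1 /\ derive1 (gluep a b p) x = gluep a b p^`() x.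
  move=> /Hc [Hn ->]; split.
    apply: (near_eq_derivable (f := cst 0)); last exact: derivable_cst.
    by near=> z; rewrite (near Hn z).
  rewrite derive1E -(near_eq_derive _ Hn) -derive1E. exact: derive1_cst.
have [xa|ax] := ltrP x a; first by apply: Hcase; rewrite xa.
have [bx|xb] := ltrP b x; first by apply: Hcase; rewrite bx orbT.
have Gc : forall c, a <= c -> c <= b -> p.[c] = 0 -> gluep a b p c = 0.
  by move=> c h1 h2 h3; rewrite /gluep h1 h2.
have [ea|na] := eqVneq x a.
  subst x; have [H1 H2] := dz (F := gluep a b p) (p := p) (c := a) (Gc a ax xb pa) pa dpa (@glue_le a b p).
  split => //; rewrite derive1E H2 /gluep ax xb /= dpa //.
have [eb|nb] := eqVneq x b.
  subst x; have [H1 H2] := dz (F := gluep a b p) (p := p) (c := b) (Gc b ax xb pb) pb dpb (@glue_le a b p).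
  split => //; rewrite derive1E H2 /gluep ax xb /= dpb //.
have ax' : a < x by rewrite lt_def na ax.
have xb' : x < b by rewrite lt_def eq_sym nb xb.
have Hn : \near x, horner p x = gluep a b p x.
  near=> z; rewrite /gluep ifT //; apply/andP; split; apply/ltW.
    by near: z; exact: lt_nbhsr.
  by near: z; exact: lt_nbhsl.
split.
  apply: (near_eq_derivable (f := horner p)); last exact: derivable_horner.
  by near=> z; rewrite (near Hn z).
rewrite derive1E -(near_eq_derive _ Hn) -derive1E -derivE /gluep ax xb //.
Unshelve. all: by end_near.
Qed.
End S.

Section P2.
Context {R : realType}.
Implicit Types (p q : {poly R}).

Definition abs_sum p := \sum_(i < size p) `|p`_i|.

Lemma abs_sum_ge0 p : 0 <= abs_sum p.
Proof. by apply: sumr_ge0 => i _; exact: normr_ge0. Qed.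

Lemma coef_bound p x : `|x| <= 1 -> `|p.[x]| <= abs_sum p.
Proof.
move=> hx; rewrite horner_coef; apply: (le_trans (ler_norm_sum _ _ _)).
apply: ler_sum => i _; rewrite normrM normrX.
by rewrite ler_piMr ?normr_ge0 // exprn_ile1 ?normr_ge0.
Qed.

Lemma odd_diff p t : 0 <= t <= 1 -> `|p.[t] - p.[- t]| <= 2 * t * abs_sum p.
Proof.
move=> /andP[t0 t1]; rewrite !horner_coef -sumrB.
apply: (le_trans (ler_norm_sum _ _ _)).
rewrite /abs_sum mulr_sumr; apply: ler_sum => i _.
rewrite -mulrBr normrM mulrC ler_wpM2r ?normr_ge0 //.
case: (nat_of_ord i) => [|j]; first by rewrite !expr0 subrr normr0 mulr_ge0.
rewrite exprNn; apply: (le_trans (ler_normB _ _)).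
rewrite normrM !normrX normrN1 expr1n mul1r ger0_norm //.
have : t ^+ j.+1 <= t by rewrite exprS ler_piMr // exprn_ile1.
move=> h; lra.
Qed.

Lemma coef_compZX p c i : (p \Po (c *: 'X))`_i = c ^+ i * p`_i.
Proof.
elim/poly_ind: p i => [|p a ih] i; first by rewrite comp_poly0 !coef0 mulr0.
rewrite comp_polyD comp_polyC comp_polyM comp_polyX !coefD !coefC.
rewrite -scalerAr coefZ coefMX coefMX.
case: i => [|i] /=; first by rewrite mulr0 expr0 mul1r.
by rewrite !addr0 ih exprS mulrA.
Qed.

Lemma take_compZX n p c : take_poly n (p \Po (c *: 'X)) = take_poly n p \Po (c *: 'X).
Proof.
apply/polyP => i; rewrite coef_take_poly !coef_compZX coef_take_poly.
by case: ifP => _ //; rewrite mulr0.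
Qed.

Lemma derivn_compZX j p c : (p \Po (c *: 'X))^`(j) = c ^+ j *: (p^`(j) \Po (c *: 'X)).
Proof.
elim: j => [|j ih]; first by rewrite expr0 scale1r.
rewrite derivnS ih derivZ deriv_comp derivZ derivX -mul_polyC.
by rewrite -derivnS mul_polyC -scalerAr mulr1 scalerA -exprSr.
Qed.

Lemma mult_root p a m q : p = ('X - a%:P) ^+ m * q -> forall j, (j < m)%N -> (p^`(j)).[a] = 0.
Proof.
move=> ->.
have key : forall j, (j <= m)%N -> exists q', (('X - a%:P) ^+ m * q)^`(j) = ('X - a%:P) ^+ (m - j) * q'.
  elim => [|j ih] hj; first by exists q; rewrite subn0.
  have [q' e] := ih (ltnW hj).
  rewrite (_ : (m - j = (m - j.+1).+1)%N) in e; last by rewrite subnSK.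
  exists ((m - j.+1).+1%:R *: q' + ('X - a%:P) * q'^`()).
  rewrite derivnS e derivM deriv_exp derivXsubC mul1r /=.
  by rewrite mulrDr -scalerAr scaler_nat -mulrnAl mulrA -exprSr.
move=> j hj; have [q' ->] := key j (ltnW hj).
by rewrite hornerM horner_exp hornerXsubC subrr expr0n subn_eq0 leqNgt hj mul0r.
Qed.

Lemma pow_expand m : exists Rm : {poly R},
  (1 - 'X^2) ^+ m = 1 - m%:R%:P * 'X^2 + Rm * 'X^4.
Proof.
elim: m => [|m [Rm ih]]; first by exists 0; rewrite expr0 !mul0r subr0 addr0.
exists (m%:R%:P + Rm - Rm * 'X^2).
rewrite exprS ih -natr1 polyCD.
have e4 : ('X^4 : {poly R}) = 'X^2 * 'X^2 by rewrite -exprD.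
rewrite e4; ring.
Qed.

Definition phi (k : nat) : {poly R} := 'X^(2 * k) * (1 - 'X^2) ^+ (2 * k + 5).

Lemma phi_root1 k j : (j < 2 * k + 5)%N -> ((phi k)^`(j)).[1] = 0.
Proof.
apply: (@mult_root _ _ _ ('X^(2 * k) * (- ('X + 1)) ^+ (2 * k + 5))).
rewrite /phi mulrCA -exprMn; congr (_ * _); congr (_ ^+ _).
rewrite (_ : ('X^2 : {poly R}) = 'X * 'X); last by rewrite expr2.
ring.
Qed.

Lemma phi_rootm1 k j : (j < 2 * k + 5)%N -> ((phi k)^`(j)).[-1] = 0.
Proof.
apply: (@mult_root _ _ _ ('X^(2 * k) * (1 - 'X) ^+ (2 * k + 5))).
rewrite /phi mulrCA -exprMn; congr (_ * _); congr (_ ^+ _).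
rewrite (_ : ('X^2 : {poly R}) = 'X * 'X); last by rewrite expr2.
rewrite polyCN. ring.
Qed.

Lemma phi_ge0 k u : `|u| <= 1 -> 0 <= (phi k).[u].
Proof.
move=> hu; rewrite /phi !hornerE; apply: mulr_ge0.
  by rewrite exprM; apply: exprn_ge0; rewrite sqr_ge0.
apply: exprn_ge0; rewrite subr_ge0 -real_normK ?num_real // expr2.
by apply: mulr_ile1.
Qed.

Lemma phi_take k : take_poly (2 * k + 3) (phi k) =
  'X^(2 * k) - (2 * k + 5)%:R%:P * 'X^(2 * k + 2).
Proof.
have [Rm e] := pow_expand (2 * k + 5).
rewrite /phi e.
have -> : 'X^(2 * k) * (1 - (2 * k + 5)%:R%:P * 'X^2 + Rm * 'X^4) =
   ('X^(2 * k) - (2 * k + 5)%:R%:P * 'X^(2 * k + 2)) + (Rm * 'X) * 'X^(2 * k + 3).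
  rewrite !exprD. ring.
rewrite take_polyDMXn //.
apply: (leq_trans (size_polyD _ _)); rewrite geq_max size_polyXn size_polyN.
apply/andP; split; first by lia.
rewrite mul_polyC (leq_trans (size_scale_leq _ _)) // size_polyXn.
lia.
Qed.

Definition yv (i : nat) : R := (1 + (i.+1%:R)^-1) / 2.

Lemma yv_inj : injective yv.
Proof.
move=> i j; rewrite /yv => /(mulIf (x := 2^-1)); rewrite invr_neq0 // => /(_ isT).
by move/addrI/invr_inj/eqP; rewrite eqr_nat eqSS => /eqP.
Qed.

Lemma yv_bnd i : 2^-1 <= yv i <= 1.
Proof.
have h0 : 0 <= (i.+1%:R : R)^-1 by rewrite invr_ge0 ler0n.
have h1 : (i.+1%:R : R)^-1 <= 1 by rewrite invf_le1 ?ltr0Sn // ler1n.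
rewrite /yv; move: h0 h1; move: (_^-1) => x h0 h1.
apply/andP; split; lra.
Qed.


Definition lag (N j : nat) : {poly R} :=
  (\prod_(i <- rem j (iota 0 N)) (yv j - yv i))^-1 *:
     \prod_(i <- rem j (iota 0 N)) ('X - (yv i)%:P).

Lemma lag_eval N j i : (j < N)%N -> (i < N)%N -> (lag N j).[yv i] = (i == j)%:R.
Proof.
move=> jN iN; rewrite /lag hornerZ horner_prod.
rewrite [X in _ * X](eq_bigr (fun l => yv i - yv l)); last by move=> l _; rewrite hornerXsubC.
have [->|ij] := eqVneq i j.
  rewrite mulVf //; rewrite prodf_seq_neq0; apply/allP => l.
  rewrite mem_rem_uniq ?iota_uniq // => /andP[lj _] /=.
  by rewrite subr_eq0; apply/negP => /eqP /yv_inj e; move: lj; rewrite e eqxx.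
rewrite [X in _ * X](big_rem i); last by rewrite mem_rem_uniq ?iota_uniq // inE ij mem_iota.
by rewrite /= subrr mul0r mulr0.
Qed.

Lemma size_lag N j : (j < N)%N -> (size (lag N j) <= N)%N.
Proof.
move=> jN; rewrite /lag (leq_trans (size_scale_leq _ _)) //.
rewrite size_prod_XsubC size_rem ?mem_iota // size_iota; lia.
Qed.

Lemma interp N (Q : {poly R}) : (size Q <= N)%N -> Q = \sum_(j < N) Q.[yv j] *: lag N j.
Proof.
move=> sQ; apply/eqP; rewrite -subr_eq0; apply/eqP.
apply: (@roots_geq_poly_eq0 _ _ (map yv (iota 0 N))).
- apply/allP => x /mapP [i]; rewrite mem_iota add0n => /andP[_ iN] ->.
  apply/rootP; rewrite hornerD hornerN horner_sum.
  rewrite (bigD1 (Ordinal iN)) //= big1 ?addr0.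
    by rewrite hornerZ lag_eval // eqxx mulr1 subrr.
  move=> j /eqP jne; rewrite hornerZ lag_eval //.
  suff -> : (i == j) = false by rewrite mulr0.
  apply/negbTE/eqP => e; apply: jne; apply: val_inj => /=; by rewrite e.
- by rewrite map_inj_uniq ?iota_uniq //; exact: yv_inj.
- rewrite size_map size_iota; apply: (leq_trans (size_polyD _ _)).
  rewrite geq_max sQ size_polyN /=; apply: (leq_trans (size_sum _ _ _)).
  apply/bigmax_leqP => j _; rewrite (leq_trans (size_scale_leq _ _)) //.
  exact: size_lag.
Qed.

Definition Ssum N := \sum_(j < N) abs_sum (lag N j).

Lemma interp_bound N (Q : {poly R}) t W : (size Q <= N)%N -> 0 <= t <= 1 ->
  (forall j, (j < N)%N -> `|Q.[yv j]| <= W) -> Q.[t] - Q.[- t] <= 2 * t * W * Ssum N.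
Proof.
move=> sQ ht hW; rewrite (interp sQ) !horner_sum -sumrB.
rewrite /Ssum !mulr_sumr; apply: ler_sum => j _.
rewrite !hornerZ -mulrBr; apply: (le_trans (ler_norm _)); rewrite normrM.
have /andP[t0 _] := ht.
rewrite [2 * t * W]mulrC -mulrA.
apply: ler_pM; [exact: normr_ge0 | exact: normr_ge0 | exact: hW | ].
by rewrite -!hornerZ -/(lag N j); exact: odd_diff.
Qed.
End P2.

Unset Implicit Arguments. Set Strict Implicit.

Lemma negx_even (R : realType) (x : R) k : (- x) ^+ (2 * k) = x ^+ (2 * k).
Proof. by rewrite !exprM sqrrN. Qed.

Lemma negx_odd (R : realType) (x : R) k : (- x) ^+ (2 * k + 3) = - x ^+ (2 * k + 3).
Proof.
rewrite exprNn -signr_odd.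
have -> : odd (2 * k + 3) = true by rewrite oddD oddM.
by rewrite expr1 mulN1r.
Qed.

Lemma nl1 j k : (j <= 2 * k + 4)%N -> (j < 2 * k + 5)%N. Proof. lia. Qed.
Lemma nl2 j k : (j.+1 <= 2 * k + 4)%N -> (j <= 2 * k + 4)%N. Proof. lia. Qed.
Lemma nl3 j k : (j < 2 * k + 3)%N -> (j <= 2 * k + 4)%N. Proof. lia. Qed.
Lemma nl4 j k : (j < 2 * k + 3)%N -> (j.+1 <= 2 * k + 4)%N. Proof. lia. Qed.
Lemma nl5 k : (2 * k + 3 <= 2 * k + 4)%N. Proof. lia. Qed.
Lemma nl6 k : (2 * k + 4 <= 2 * k + 4)%N. Proof. lia. Qed.
Lemma nl7 k : (2 * k + 4 = (2 * k + 3).+1)%N. Proof. lia. Qed.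

Lemma negx_even2 (R : realType) (x : R) k : (- x) ^+ (2 * k + 2) = x ^+ (2 * k + 2).
Proof. by rewrite (exprD (- x) (2 * k) 2) (exprD x (2 * k) 2) negx_even sqrrN. Qed.

Lemma cancel_pow (R : realType) (t y : R) a b : t != 0 ->
  t ^+ (a + b) * (t^-1 * y) ^+ a = t ^+ b * y ^+ a.
Proof.
move=> tn0; rewrite exprMn exprVn exprD mulrA [t ^+ a * _]mulrC.
by rewrite -[t ^+ b * _ * _]mulrA mulfV ?expf_neq0 // mulr1.
Qed.

Theorem lemma3p8 (R : realType) (r n : nat) (A : R) :
  (3 <= r)%N -> odd r -> (r.-1 <= n)%N -> 0 < A ->
  exists f : R -> R,
    [/\ Cr r f,
        (forall x : R, -1 <= x <= -(1/2) -> f x = 0),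
        (forall x : R, -1 <= x <= 1 -> 0 <= f x) &
        forall P : {poly R},
          (size P <= n.+1)%N ->
          (forall x : R, -(1/2) <= x <= 1/2 -> 0 <= P.[x]) ->
          (forall i : nat, (i < r)%N -> (derivn i P).[0] = derive1n i f 0) ->
          supnorm (fun x => f x - P.[x]) > A * supnorm (derive1n r f)].
Proof.
move=> hr3 rodd rn A0.
have [k rk] : exists k, r = (2 * k + 3)%N.
  exists (r./2).-1; have := odd_double_half r; rewrite rodd.
  move: (r./2) => h; lia.
subst r.
set m : R := (2 * k + 5)%:R.
set B : R := abs_sum ((@phi R k)^`(2 * k + 3)).
set N := (n.+1 - (2 * k + 3))%N.
set S : R := @Ssum R N.
set W := 2 ^+ (2 * k + 3) * (A * B + 1 + m).
have B0 : 0 <= B by exact: abs_sum_ge0.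
have S0 : 0 <= S by apply: sumr_ge0 => j _; exact: abs_sum_ge0.
have m0 : 0 <= m by rewrite ler0n.
have W0 : 0 <= W.
  have AB : 0 <= A * B by rewrite mulr_ge0 // ltW.
  rewrite /W; apply: mulr_ge0; [apply: exprn_ge0; lra | lra].
set t : R := (4 + W * S)^-1.
have WS0 : 0 <= W * S by exact: mulr_ge0.
have t0 : 0 < t by rewrite invr_gt0; lra.
have t14 : t <= 4^-1 by rewrite lef_pV2 ?posrE; lra.
have tWS : t * (W * S) < 1.
  by rewrite mulrC -(ltr_pdivlMr _ _ t0) invrK; lra.
set p : {poly R} := t ^+ (2 * k + 3) *: (@phi R k \Po (t^-1 *: 'X)).
have Fd : forall j x, (p^`(j)).[x] =
    t ^+ (2 * k + 3) * (t^-1) ^+ j * ((@phi R k)^`(j)).[t^-1 * x].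
  move=> j x; rewrite /p derivnZ derivn_compZX hornerZ hornerZ horner_comp.
  by rewrite hornerZ hornerX mulrA.
have tn0 : t != 0 by rewrite gt_eqF.
have Froot : forall j, (j <= 2 * k + 4)%N -> p^`(j).[t] = 0 /\ p^`(j).[- t] = 0.
  move=> j hj; rewrite !Fd mulrN mulVf // phi_root1 ?phi_rootm1 ?mulr0 //; exact: nl1.
have htt : - t < t by lra.
have Fglue : forall j, (j <= 2 * k + 4)%N -> derive1n j (gluep (- t) t p) = gluep (- t) t (p^`(j)).
  elim => [|j ih] hj; first by [].
  rewrite derive1nS ih; last exact: nl2.
  apply/funext => x.
  have [r1 r2] := Froot j (ltnW hj).
  have [r3 r4] := Froot j.+1 hj.
  rewrite derivnS in r3 r4.
  by rewrite (glue_der htt r2 r1 r4 r3 x).2 derivnS.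
have t12 : t <= 2^-1 by lra.
have ti0 : 0 <= t^-1 by rewrite invr_ge0 ltW.
exists (gluep (- t) t p); split.
- split.
    move=> j x hj; rewrite Fglue; last exact: nl3.
    have [r1 r2] := Froot j (@nl3 j k hj).
    have [r3 r4] := Froot j.+1 (@nl4 j k hj).
    rewrite derivnS in r3 r4.
    exact: (glue_der htt r2 r1 r4 r3 x).1.
  rewrite Fglue; last exact: nl5.
  move=> x; apply: differentiable_continuous; rewrite -derivable1_diffP.
  have [r1 r2] := Froot (2 * k + 3)%N (nl5 k).
  have [r3 r4] := Froot (2 * k + 4)%N (nl6 k).
  rewrite nl7 derivnS in r3 r4.
  exact: (glue_der htt r2 r1 r4 r3 x).1.
- move=> x /andP[_ hx]; rewrite /gluep ifF //; apply/negbTE.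
  rewrite negb_and -ltNge; apply/orP; left; lra.
- move=> x _; rewrite /gluep; case: ifP => [/andP[h1 h2]|_ //].
  rewrite (Fd 0%N) expr0 mulr1 mulr_ge0 ?exprn_ge0 ?(ltW t0) //.
  apply: phi_ge0; rewrite normrM (ger0_norm ti0).
  rewrite ler_pdivrMl // mulr1 ler_norml; apply/andP; split; lra.
move=> P sP Ppos Pder.
have Pcoef : forall i, (i < 2 * k + 3)%N -> P`_i = p`_i.
  move=> i hi; have := Pder i hi.
  rewrite Fglue; last exact: (@nl3 i k hi).
  rewrite /gluep ifT; last by apply/andP; split; lra.
  rewrite !horner_coef0 !coef_derivn addn0 ffactnn -[LHS]mulr_natr -[RHS]mulr_natr.
  by move/mulIf; apply; rewrite pnatr_eq0 -lt0n fact_gt0.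
set T := take_poly (2 * k + 3) P.
set Q := drop_poly (2 * k + 3) P.
have eT : T = t ^+ (2 * k + 3) *: (('X^(2 * k) - m%:P * 'X^(2 * k + 2)) \Po (t^-1 *: 'X)).
  transitivity (take_poly (2 * k + 3) p).
    apply/polyP => i; rewrite !coef_take_poly; case: ifP => // hi; exact: Pcoef.
  by rewrite /p take_polyZ take_compZX phi_take.
have hT : forall x, T.[x] = t ^+ (2 * k + 3) * ((t^-1 * x) ^+ (2 * k) - m * (t^-1 * x) ^+ (2 * k + 2)).
  move=> x; rewrite eT hornerZ horner_comp !hornerE //.
have eP : forall x, P.[x] = T.[x] + Q.[x] * x ^+ (2 * k + 3).
  by move=> x; rewrite -{1}(poly_take_drop (2 * k + 3) P) hornerD hornerM hornerXn.
have sQ : (size Q <= N)%N by rewrite size_drop_poly /N leq_sub2r.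
rewrite ltNge; apply/negP => hle.
have hM : supnorm (derive1n (2 * k + 3) (gluep (- t) t p)) <= B.
  rewrite Fglue; last exact: nl5.
  rewrite /supnorm; apply: ge_sup.
    exists (`|gluep (- t) t p^`(2 * k + 3) 0|); exists 0 => //=.
    by rewrite in_itv /=; apply/andP; split; lra.
  move=> z [x _ <-]; rewrite /gluep; case: ifP => [/andP[h1 h2]|_]; last by rewrite normr0.
  rewrite Fd -exprMn mulfV // expr1n mul1r.
  apply: coef_bound; rewrite normrM (ger0_norm ti0) ler_pdivrMl // mulr1 ler_norml.
  by apply/andP; split; lra.
have hsup : supnorm (fun x => gluep (- t) t p x - P.[x]) <= A * B.
  by apply: (le_trans hle); rewrite ler_pM2l.
have hs : has_sup [set `|gluep (- t) t p x - P.[x]| | x in `[-1, 1]%classic].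
  split.
    exists (`|gluep (- t) t p 0 - P.[0]|); exists 0 => //=.
    by rewrite in_itv /=; apply/andP; split; lra.
  exists (abs_sum p + abs_sum P) => z [x hx <-].
  have hx1 : `|x| <= 1 by move: hx; rewrite /= in_itv /= ler_norml.
  apply: (le_trans (ler_normB _ _)); apply: lerD; last exact: coef_bound.
  by apply: (le_trans (glue_le _ _ _ _)); exact: coef_bound.
have hPy : forall j, (j < N)%N -> `|P.[yv j]| <= A * B.
  move=> j jN; apply: le_trans hsup; rewrite /supnorm.
  have /andP[y1 y2] := yv_bnd (R := R) j.
  have -> : `|P.[yv j]| = `|gluep (- t) t p (yv j) - P.[yv j]|.
    rewrite /gluep ifF ?sub0r ?normrN //; apply/negbTE; rewrite negb_and -!ltNge.
    by apply/orP; right; lra.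
  apply: (sup_upper_bound hs); exists (yv j) => //=.
  by rewrite in_itv /=; apply/andP; split; lra.
have hQy : forall j, (j < N)%N -> `|Q.[yv j]| <= W.
  move=> j jN; have /andP[y1 y2] := yv_bnd (R := R) j.
  have hPj := hPy j jN.
  move: y1 y2 hPj; move: (yv j) => y y1 y2 hPj.
  have y0 : 0 <= y by lra.
  have e1 := @cancel_pow R t y (2 * k) 3 tn0.
  have e2 := @cancel_pow R t y (2 * k + 2) 1 tn0.
  rewrite (_ : (2 * k + 2 + 1 = 2 * k + 3)%N) in e2; last by rewrite -addnA.
  have ha : 0 <= t ^+ 3 * y ^+ (2 * k) <= 1.
    apply/andP; split; first by rewrite mulr_ge0 ?exprn_ge0 // ltW.
    by rewrite mulr_ile1 ?exprn_ge0 ?exprn_ile1 // ?ltW //; lra.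
  have hb : 0 <= t ^+ 1 * y ^+ (2 * k + 2) <= 1.
    apply/andP; split; first by rewrite mulr_ge0 ?exprn_ge0 // ltW.
    by rewrite mulr_ile1 ?exprn_ge0 ?exprn_ile1 // ?ltW //; lra.
  have Ty : `|T.[y]| <= 1 + m.
    rewrite hT mulrBr mulrCA e1 e2.
    move: ha hb; move: (t ^+ 3 * _) (t ^+ 1 * _) => a b /andP[a0 a1] /andP[b0 b1].
    rewrite ler_norml; apply/andP; split; nra.
  have hQ1 : `|Q.[y]| * y ^+ (2 * k + 3) <= A * B + 1 + m.
    have -> : `|Q.[y]| * y ^+ (2 * k + 3) = `|P.[y] - T.[y]|.
      by rewrite eP addrAC subrr add0r normrM (ger0_norm (exprn_ge0 _ y0)).
    by rewrite -addrA; apply: (le_trans (ler_normB _ _)); apply: lerD.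
  have y2r : (2^-1) ^+ (2 * k + 3) <= y ^+ (2 * k + 3).
    by apply: lerXn2r; rewrite ?nnegrE //; lra.
  have : `|Q.[y]| * (2^-1) ^+ (2 * k + 3) <= A * B + 1 + m.
    apply: le_trans hQ1; apply: ler_wpM2l => //; exact: normr_ge0.
  by rewrite exprVn ler_pdivrMr ?exprn_gt0 // mulrC.
have hPt : 0 <= P.[t] by apply: Ppos; rewrite div1r; apply/andP; split; lra.
have hPmt : 0 <= P.[- t] by apply: Ppos; rewrite div1r; apply/andP; split; lra.
have eTt : T.[t] = t ^+ (2 * k + 3) * (1 - m).
  by rewrite hT mulVf // !expr1n mulr1.
have eTmt : T.[- t] = t ^+ (2 * k + 3) * (1 - m).
  by rewrite hT mulrN mulVf // negx_even negx_even2 !expr1n mulr1.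
have tr0 : 0 < t ^+ (2 * k + 3) by exact: exprn_gt0.
have hq : 2 * (m - 1) <= Q.[t] - Q.[- t].
  have : 0 <= t ^+ (2 * k + 3) * (2 * (1 - m) + (Q.[t] - Q.[- t])).
    have := addr_ge0 hPt hPmt; rewrite !eP eTt eTmt negx_odd. 
    lra.
  rewrite pmulr_rge0 //; lra.
have ht : 0 <= t <= 1 by apply/andP; split; lra.
have hd := interp_bound sQ ht hQy.
have m5 : 5 <= m by rewrite /m ler_nat leq_addl.
rewrite -/S in hd.
nra.
Qed.
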